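(* Let $G$ be a graph on $n\geq 3$ vertices and let $k$ be an integer with $2\leq k<n$. Suppose that every connected graph $H$ on $N$ vertices with $2\leq N\leq n$ satisfies the implication $\psi_{N-1}(H)=2\Rightarrow \psi_N(H)=1$. Then $\psi_k(G)=n-k+1$ implies $\psi_j(G)=n-j+1$ for all integers $j$ with $k<j\leq n$.
   Context: All graphs are finite, simple and nonempty. For a graph $G$ and a positive integer $k$, a $k$-path vertex cover ($k$-PVC) of $G$ is a set $S$ of vertices such that every path on $k$ vertices in $G$ contains at least one vertex of $S$ (if $G$ has no path on $k$ vertices, the empty set is a $k$-PVC). $\psi_k(G)$ denotes the minimum cardinality of a $k$-PVC of $G$. *)

(* Defs.v *)
From mathcomp Require Import all_boot.
Set Implicit Arguments. Unset Strict Implicit. Unset Printing Implicit Defensive.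

Definition simple_graph (T : finType) (e : rel T) : Prop :=
  symmetric e /\ irreflexive e.

Definition connected_graph (T : finType) (e : rel T) : Prop :=
  forall x y : T, connect e x y.

Definition is_kpath (T : finType) (e : rel T) (k : nat) (s : seq T) : bool :=
  [&& size s == k, uniq s &
      (if s is x :: s' then path e x s' else true)].

(* (sequences of length k are enumerated as k-tuples, making this boolean) *)
Definition is_kpvc (T : finType) (e : rel T) (k : nat) (S : {set T}) : bool :=
  [forall t : k.-tuple T, is_kpath e k t ==> has (fun v => v \in S) t].

(* psi_k(G): minimum cardinality of a k-PVC (for k >= 1, [set: T] is a
   k-PVC, so the default #|T| of the fold is attained). *)
Definition psi (T : finType) (e : rel T) (k : nat) : nat :=
  \big[minn/#|T|]_(S : {set T} | is_kpvc e k S) #|S|.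

(* Main.v *)
Require Import Defs.
From mathcomp Require Import all_boot.
From mathcomp Require Import zify.
Set Implicit Arguments. Unset Strict Implicit. Unset Printing Implicit Defensive.

Lemma kpvcP (T : finType) (e : rel T) k (S : {set T}) :
  reflect (forall s, is_kpath e k s -> has (fun v => v \in S) s) (is_kpvc e k S).
Proof.
apply: (iffP forallP) => [H s Hs | H t]; last by apply/implyP; apply: H.
have Hsz : size s == k by case/and3P: Hs.
by have /implyP := H (Tuple Hsz); apply.
Qed.

Lemma notkpvc_ex (T : finType) (e : rel T) k (S : {set T}) :
  ~~ is_kpvc e k S -> exists s, is_kpath e k s /\ {subset s <= ~: S}.
Proof.
rewrite /is_kpvc negb_forall => /existsP [t]; rewrite negb_imply => /andP [Hp Hn].
exists t; split => // x xt; rewrite in_setC; apply: contraNN Hn => xS.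
by apply/hasP; exists x.
Qed.

Lemma exkpath_notkpvc (T : finType) (e : rel T) k (S : {set T}) s :
  is_kpath e k s -> {subset s <= ~: S} -> ~~ is_kpvc e k S.
Proof.
move=> Hp Hs; apply/negP => /kpvcP /(_ _ Hp) /hasP [x xs].
by move: (Hs x xs); rewrite in_setC => /negP.
Qed.

Lemma bigmin_le (I : eqType) (r : seq I) (P : pred I) (F : I -> nat) x i :
  i \in r -> P i -> \big[minn/x]_(j <- r | P j) F j <= F i.
Proof.
elim: r => // a r IH; rewrite inE big_cons; case/orP => [/eqP <- -> | ir Pi].
  exact: geq_minl.
case: (P a); last exact: IH.
exact: leq_trans (geq_minr _ _) (IH ir Pi).
Qed.

Lemma psi_le (T : finType) (e : rel T) k (S : {set T}) :
  is_kpvc e k S -> psi e k <= #|S|.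
Proof. by move=> H; apply: bigmin_le => //; rewrite mem_index_enum. Qed.

Lemma psi_ge (T : finType) (e : rel T) k m :
  (forall S : {set T}, is_kpvc e k S -> m <= #|S|) -> m <= #|T| -> m <= psi e k.
Proof.
move=> H HT; rewrite /psi; apply: (big_ind (fun x => m <= x)) => //.
by move=> x y Hx Hy; rewrite leq_min Hx Hy.
Qed.

Lemma noroom (T : finType) (s : seq T) (A : {set T}) :
  uniq s -> {subset s <= A} -> size s <= #|A|.
Proof.
move=> Hu Hs; rewrite -(card_uniqP Hu); apply: subset_leq_card; by apply/subsetP.
Qed.

Lemma ex_subset (T : finType) (A : {set T}) m :
  m <= #|A| -> exists2 B : {set T}, B \subset A & #|B| = m.
Proof.
have: forall n (A : {set T}), #|A| = n -> m <= n ->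
    exists2 B : {set T}, B \subset A & #|B| = m; last by move=> H; exact: H.
elim=> [|n IH] {}A HA Hm.
  by exists A => //; rewrite HA; move: Hm; rewrite leqn0 => /eqP ->.
case: (leqP m n) => Hmn; last first.
  by exists A => //; rewrite HA; apply/eqP; rewrite eqn_leq Hm Hmn.
have [x xA] : exists x, x \in A by apply/card_gt0P; rewrite HA.
have cA : #|A :\ x| = n by move: HA; rewrite (cardsD1 x) xA; case.
have [B BA cB] := IH (A :\ x) cA Hmn.
by exists B => //; apply: subset_trans BA (subD1set _ _).
Qed.

Lemma psi_upper (T : finType) (e : rel T) m :
  1 <= m <= #|T| -> psi e m <= #|T| - m + 1.
Proof.
move=> /andP [H1 H2].
have [S _ HS] := @ex_subset T [set: T] (#|T| - m + 1) ltac:(rewrite cardsT; lia).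
rewrite -HS; apply: psi_le; apply/kpvcP => s Hs; apply: contraT => Hn.
case/and3P: Hs => /eqP Hsz Hu _.
have : size s <= #|~: S|.
  apply: noroom => // x xs; rewrite in_setC; apply/negP => xS.
  by move/negP: Hn; apply; apply/hasP; exists x.
rewrite cardsCs setCK HS Hsz; lia.
Qed.

Lemma psi_lower (T : finType) (e : rel T) m :
  1 <= m <= #|T| ->
  (forall W : {set T}, m <= #|W| -> exists s, is_kpath e m s /\ {subset s <= W}) ->
  #|T| - m + 1 <= psi e m.
Proof.
move=> /andP [H1 H2] H; apply: psi_ge; last by lia.
move=> S HS; rewrite leqNgt; apply/negP => Hlt.
have [s [Hs Hsub]] := H (~: S) ltac:(rewrite cardsCs setCK; lia).
by move: HS; rewrite (negbTE (exkpath_notkpvc Hs Hsub)).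
Qed.

Definition hrel (T : finType) (e : rel T) (W : {set T}) : rel 'I_#|W| :=
  fun i j => e (enum_val i) (enum_val j).

Lemma fwd (T : finType) (e : rel T) (W : {set T}) x0 (Hx0 : x0 \in W) m s :
  {subset s <= W} -> is_kpath e m s ->
  is_kpath (@hrel _ e W) m (map (enum_rank_in Hx0) s).
Proof.
move=> Hs; set f := enum_rank_in Hx0.
have fK : forall x, x \in W -> enum_val (f x) = x := fun x H => enum_rankK_in Hx0 H.
case/and3P => Hsz Hu Hp.
rewrite /is_kpath size_map Hsz /= map_inj_in_uniq ?Hu /=; last first.
  by move=> x y xs ys Hf; rewrite -(fK x (Hs _ xs)) Hf fK // Hs.
case: s Hs {Hu Hsz} Hp => //= z s' Hs Hp.
have : z \in W by apply: Hs; rewrite inE eqxx.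
have : {subset s' <= W} by move=> x xs; apply: Hs; rewrite inE xs orbT.
elim: s' z {Hs} Hp => //= y s'' IH z /andP [Hzy Hp] Hs zW.
have yW : y \in W by apply: Hs; rewrite inE eqxx.
rewrite /hrel !fK // Hzy /=; apply: IH => // x xs; apply: Hs; rewrite inE xs orbT //.
Qed.

Lemma bwd (T : finType) (e : rel T) (W : {set T}) m (s : seq 'I_#|W|) :
  is_kpath (@hrel _ e W) m s ->
  is_kpath e m (map enum_val s) /\ {subset map enum_val s <= W}.
Proof.
case/and3P => Hsz Hu Hp; split; last first.
  by move=> x /mapP [i _ ->]; exact: enum_valP.
rewrite /is_kpath size_map Hsz (map_inj_uniq enum_val_inj) Hu /=.
case: s {Hu Hsz} Hp => //= z s'; rewrite path_map.
by apply: sub_path => a b.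
Qed.

Lemma step (T : finType) (e : rel T) j :
  simple_graph e -> 2 <= j -> j < #|T| ->
  (forall (N : nat) (h : rel 'I_N),
      2 <= N <= #|T| -> simple_graph h -> connected_graph h ->
      psi h N.-1 = 2 -> psi h N = 1) ->
  (forall W : {set T}, j <= #|W| -> exists s, is_kpath e j s /\ {subset s <= W}) ->
  forall W : {set T}, j.+1 <= #|W| -> exists s, is_kpath e j.+1 s /\ {subset s <= W}.
Proof.
move=> Hg Hj2 HjT Hyp Pj W HW.
have [W' W'W cW'] := ex_subset HW.
have [x0 Hx0] : exists x0, x0 \in W' by apply/card_gt0P; rewrite cW'.
set h := @hrel _ e W'.
set f := enum_rank_in Hx0.
have valK : cancel enum_val f := enum_valK_in Hx0.
have Hsimple : simple_graph h.
  split => [a b|a]; rewrite /h /hrel; [apply: Hg.1 | apply: Hg.2].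
have Pj' : forall V : {set 'I_#|W'|}, j <= #|V| ->
    exists s, is_kpath h j s /\ {subset s <= V}.
  move=> V HV.
  have [t [Ht Hts]] := Pj (enum_val @: V) ltac:(rewrite card_imset //; exact: enum_val_inj).
  exists (map f t); split.
    apply: fwd => // x /Hts /imsetP [i _ ->]; exact: enum_valP.
  by move=> a /mapP [x xt ->]; have /imsetP [i iV ->] := Hts _ xt; rewrite valK.
have Hconn : connected_graph h.
  move=> a b; case: (eqVneq a b) => [->|Hab]; first exact: connect0.
  have cD : #|[set: 'I_#|W'|] :\ a :\ b| = j - 1.
    move: (cardsD1 a [set: 'I_#|W'|]) (cardsD1 b ([set: 'I_#|W'|] :\ a)).
    rewrite cardsT card_ord !inE eq_sym Hab /=; move: cW' => H1 H2 H3; have := etrans (esym H1) H2; rewrite H3 !add1n => -[->]; by rewrite subn1.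
  have [B BD cB] := @ex_subset _ ([set: 'I_#|W'|] :\ a :\ b) (j - 2)
     ltac:(rewrite cD; lia).
  have aB : a \notin B.
    by apply/negP => /(subsetP BD); rewrite !inE eqxx andbF.
  have bB : b \notin B.
    by apply/negP => /(subsetP BD); rewrite !inE eqxx.
  have cCe : #|a |: (b |: B)| = j.
    rewrite cardsU1 cardsU1 !inE negb_or Hab aB bB cB /=; lia.
  have cC : j <= #|a |: (b |: B)| by rewrite cCe.
  have [t [Ht Hts]] := Pj' _ cC.
  case/and3P: Ht => /eqP Hsz Hu Hp.
  have Hall : {subset a |: (b |: B) <= t}.
    have Heq : (mem t) =i (a |: (b |: B)).
      apply/subset_cardP; last by apply/subsetP.
      apply/eqP; rewrite eqn_leq (card_uniqP Hu) Hsz cC /=.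
      by rewrite cCe.
    by move=> x; rewrite -Heq.
  have at' : a \in t by apply: Hall; rewrite !inE eqxx.
  have bt : b \in t by apply: Hall; rewrite !inE eqxx orbT.
  case: t {Hall Hts Hu Hsz} Hp at' bt => // z t' Hp at' bt.
  have HC := path_connect Hp.
  have symC : connect_sym h by apply: sym_connect_sym; exact: Hsimple.1.
  apply: connect_trans (_ : connect h a z) (HC _ bt).
  by rewrite symC; apply: HC.
have Hpsi2 : psi h (#|W'|).-1 = 2.
  have -> : (#|W'|).-1 = j by rewrite cW'.
  apply/eqP; rewrite eqn_leq; apply/andP; split.
    have := @psi_upper _ h j; rewrite card_ord => H; apply: leq_trans (H _) _; move: cW'; lia.
  have := @psi_lower _ h j; rewrite card_ord => H.
  apply: leq_trans (H _ Pj'); move: cW'; lia.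
have N2 : 2 <= #|W'| <= #|T| by apply/andP; split; [rewrite cW'; lia | exact: max_card].
have H1 := Hyp #|W'| h N2 Hsimple Hconn Hpsi2.
have : ~~ is_kpvc h #|W'| set0.
  by apply/negP => Hc; have := psi_le Hc; rewrite H1 cards0.
case/notkpvc_ex => s [Hs _]; have [Hs' Hsub] := bwd Hs.
exists (map enum_val s); rewrite -cW'; split => //.
by move=> x /Hsub; apply: (subsetP W'W).
Qed.

Theorem mainTheorem10 (T : finType) (e : rel T) (k : nat) :
  simple_graph e ->
  3 <= #|T| ->
  2 <= k < #|T| ->
  (forall (N : nat) (h : rel 'I_N),
      2 <= N <= #|T| -> simple_graph h -> connected_graph h ->
      psi h N.-1 = 2 -> psi h N = 1) ->
  psi e k = #|T| - k + 1 ->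
  forall j : nat, k < j <= #|T| -> psi e j = #|T| - j + 1.
Proof.
move=> Hg Hn /andP [Hk2 HkT] Hyp Hpsi j /andP [Hkj HjT].
have P_k : forall W : {set T}, k <= #|W| -> exists s, is_kpath e k s /\ {subset s <= W}.
  move=> W HW.
  have : ~~ is_kpvc e k (~: W).
    apply/negP => Hc; have := psi_le Hc; rewrite Hpsi cardsCs setCK; lia.
  by case/notkpvc_ex => s [Hs Hsub]; exists s; split => // x /Hsub; rewrite setCK.
have P : forall i, k <= i <= #|T| ->
    forall W : {set T}, i <= #|W| -> exists s, is_kpath e i s /\ {subset s <= W}.
  elim=> [|i IH] /andP [Hki HiT]; first by lia.
  case Heq: (k == i.+1); first by move/eqP: Heq => <-.
  apply: step => //; first by lia.
  apply: IH; apply/andP; split; lia.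
apply/eqP; rewrite eqn_leq psi_upper /=; last first. apply/andP; split. lia. exact: HjT.
apply: psi_lower. apply/andP; split. lia. lia.
apply: P. apply/andP; split. lia. lia.
Qed.
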